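(* Let $\Sigma$ be a finite alphabet and $\$\notin\Sigma$. If $L_1,\dots,L_n\subseteq\Sigma^*$ are languages each definable by a regulated $\mathsf{C\text{-}RASP}$ formula over $\Sigma$, then the language $L_1\$L_2\$\cdots\$L_n\subseteq(\Sigma\cup\{\$\})^*$ is definable by a $\mathsf{C\text{-}RASP}$ formula.
   Context: $\mathsf{C\text{-}RASP}$ formulas over a finite alphabet $\Sigma$: $\phi ::= \sigma \mid \Diamond^{-}\phi \mid \Box^{-}\phi \mid \neg\phi \mid \phi_1\wedge\phi_2 \mid \sum_{t\in\mathcal{T}}\alpha_t t\sim k$, terms $t ::= \#[\phi] \mid c$, with $\sigma\in\Sigma$, $\alpha_t,k,c\in\mathbb{Z}$, ${\sim}\in\{<,\le,=,\ge,>\}$. Semantics at position $i$ of $w=w_1\cdots w_n$: $w,i\models\sigma$ iff $w_i=\sigma$; Boolean connectives as usual; $w,i\models\Diamond^{-}\phi$ iff $w,j\models\phi$ for some $j<i$; $w,i\models\Box^{-}\phi$ iff $w,j\models\phi$ for all $j\le i$; $\#[\phi]$ evaluates to $|\{j\in[1,i]: w,j\models\phi\}|$, $c$ to $c$, comparisons are integer comparisons. $w\models\phi$ iff $w,|w|\models\phi$, and $\phi$ defines $L(\phi)=\{w: w\models\phi\}$. A formula is regulated if no atomic formula $\sigma$ occurs outside the scope of a counting operator $\#$. *)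

(* Defs.v *)
From mathcomp Require Import all_boot all_order all_algebra.
Set Implicit Arguments. Unset Strict Implicit. Unset Printing Implicit Defensive.
Import Order.TTheory GRing.Theory Num.Theory.
Local Open Scope ring_scope.

Inductive cmp := CLt | CLe | CEq | CGe | CGt.

Definition cmp_eval (c : cmp) (x y : int) : bool :=
  match c with
  | CLt => x < y | CLe => x <= y | CEq => x == y | CGe => x >= y | CGt => x > y
  end.

(* Formulas over alphabet S. A linear combination sum_t alpha_t t of terms
   t ::= #[phi] | c is represented by the list-like type [lin]. *)
Inductive form (S : Type) : Type :=
| FSym : S -> form S
| FDia : form S -> form S
| FBox : form S -> form S
| FNot : form S -> form S
| FAnd : form S -> form S -> form S
| FCmp : lin S -> cmp -> int -> form S
with lin (S : Type) : Type :=
| LNil : lin S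
| LCount : int -> form S -> lin S -> lin S
| LConst : int -> int -> lin S -> lin S.

Arguments FSym {S}. Arguments FDia {S}. Arguments FBox {S}. Arguments FNot {S}.
Arguments FAnd {S}. Arguments FCmp {S}. Arguments LNil {S}.
Arguments LCount {S}. Arguments LConst {S}.

(* Positions are 1..size w; w_i = nth (i-1). *)
Fixpoint sat {S : eqType} (f : form S) (w : seq S) (i : nat) {struct f} : bool :=
  match f with
  | FSym a => (0 < i)%N && (nth None (map Some w) i.-1 == Some a)
  | FDia g => has (fun j => sat g w j) (iota 1 i.-1)
  | FBox g => all (fun j => sat g w j) (iota 1 i)
  | FNot g => ~~ sat g w i
  | FAnd g h => sat g w i && sat h w i
  | FCmp l c k => cmp_eval c (lval l w i) k
  end
with lval {S : eqType} (l : lin S) (w : seq S) (i : nat) {struct l} : int :=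
  match l with
  | LNil => 0
  | LCount a g r => a * (count (fun j => sat g w j) (iota 1 i))%:Z + lval r w i
  | LConst a c r => a * c + lval r w i
  end.

Definition models {S : eqType} (w : seq S) (f : form S) : bool := sat f w (size w).

(* regulated: no atomic formula outside the scope of a counting operator *)
Fixpoint regulated {S : Type} (f : form S) : bool :=
  match f with
  | FSym _ => false
  | FDia g | FBox g | FNot g => regulated g
  | FAnd g h => regulated g && regulated h
  | FCmp _ _ _ => true
  end.

Definition definable {S : eqType} (L : seq S -> Prop) : Prop :=
  exists f : form S, forall w, L w <-> models w f.

Definition reg_definable {S : eqType} (L : seq S -> Prop) : Prop :=
  exists f : form S, regulated f /\ forall w, L w <-> models w f.

(* Alphabet Sigma ∪ {$} is option S, with $ = None. *)
Fixpoint sepjoin {S : Type} (ws : seq (seq S)) : seq (option S) :=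
  match ws with
  | [::] => [::]
  | [:: u] => map Some u
  | u :: rest => map Some u ++ None :: sepjoin rest
  end.

Definition sepconcat {S : Type} (n : nat) (L : nat -> seq S -> Prop)
  (w : seq (option S)) : Prop :=
  exists ws : seq (seq S), size ws = n /\
    (forall i, (i < n)%N -> L i (nth [::] ws i)) /\ w = sepjoin ws.

(* Main.v *)
Require Import Defs.
From mathcomp Require Import all_boot all_order all_algebra.
Set Implicit Arguments. Unset Strict Implicit. Unset Printing Implicit Defensive.
Import Order.TTheory GRing.Theory Num.Theory.

Notation form := Defs.form.
Scheme form_ind2 := Induction for Defs.form Sort Prop
  with lin_ind2 := Induction for Defs.lin Sort Prop.

Lemma iota1S n : iota 1 n.+1 = rcons (iota 1 n) n.+1.
Proof. by have := iotaD 1 n 1; rewrite addn1 => ->; rewrite cats1 add1n. Qed.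
Lemma count_iota1S (p : pred nat) n : count p (iota 1 n.+1) = count p (iota 1 n) + p n.+1.
Proof. by rewrite iota1S -cats1 count_cat /= addn0. Qed.
Lemma count_seg (sg P : nat -> bool) i :
  count (fun j => sg j && P (count sg (iota 1 j))) (iota 1 i) = count P (iota 1 (count sg (iota 1 i))).
Proof.
elim: i => [|i IH] //.
rewrite !count_iota1S IH.
case: (sg i.+1) => /=; last by rewrite !addn0.
by rewrite addn1 count_iota1S.
Qed.
Lemma count_pos (p : nat -> bool) j : (0 < j)%N -> p j -> (0 < count p (iota 1 j))%N.
Proof.
move=> hj pj; rewrite -has_count; apply/hasP; exists j => //.
by rewrite mem_iota hj add1n ltnSn.
Qed.
Lemma count_iota_pred (p : pred nat) c :
  count p (iota 1 c) = count p (iota 1 c.-1) + ((0 < c)%N && p c).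
Proof. by case: c => [|c] //; rewrite count_iota1S. Qed.

Section Tr0.
Variable S : eqType.

Definition segF (k : nat) : form (option S) :=
  FAnd (FNot (FSym None)) (FCmp (LCount 1%R (FSym None) LNil) CEq (Posz k)).
Definition geF {T} (f : form T) (m : nat) : form T :=
  FCmp (LCount 1%R f LNil) CGe (Posz m).
Definition FOr {T} (a b : form T) := FNot (FAnd (FNot a) (FNot b)).
Arguments segF : simpl never.
Arguments geF : simpl never.
Arguments FOr : simpl never.

Fixpoint tr (k : nat) (f : form S) : form (option S) :=
  match f with
  | FSym a => FSym (Some a)
  | FDia g =>
      let A := FAnd (geF (segF k) 1) (tr k g) in
      let M := FAnd (segF k) (tr k g) in
      FOr (FAnd A (geF M 2)) (FAnd (FNot A) (geF M 1))
  | FBox g => FBox (FNot (FAnd (segF k) (FNot (tr k g))))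
  | FNot g => FNot (tr k g)
  | FAnd g h => FAnd (tr k g) (tr k h)
  | FCmp l c m => FCmp (trl k l) c m
  end
with trl (k : nat) (l : lin S) : lin (option S) :=
  match l with
  | LNil => LNil
  | LCount a g r => LCount a (FAnd (segF k) (tr k g)) (trl k r)
  | LConst a c r => LConst a c (trl k r)
  end.

Lemma geF_sat (T : eqType) (f : form T) m w i :
  sat (geF f m) w i = (m <= count (fun j => sat f w j) (iota 1 i))%N.
Proof. by rewrite /geF /= mul1r addr0 /= lez_nat. Qed.
Lemma FOr_sat (T : eqType) (a b : form T) w i : sat (FOr a b) w i = sat a w i || sat b w i.
Proof. by rewrite /FOr /= negb_and !negbK. Qed.

Lemma sat_and (T : eqType) (a b : form T) w i : sat (FAnd a b) w i = sat a w i && sat b w i.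
Proof. by []. Qed.
Lemma sat_not (T : eqType) (a : form T) w i : sat (FNot a) w i = ~~ sat a w i.
Proof. by []. Qed.

Lemma sat_segF k (w : seq (option S)) j : sat (segF k) w j =
  ~~ ((0 < j)%N && (nth None (map Some w) j.-1 == Some None)) &&
  (count (fun j => (0 < j)%N && (nth None (map Some w) j.-1 == Some None)) (iota 1 j) == k)%N.
Proof. by rewrite /segF /= mul1r addr0 eqz_nat. Qed.
Opaque segF geF FOr.

Section Inner.
Variables (w : seq (option S)) (u : seq S) (k N : nat).
Local Notation sg j := (sat (segF k) w j).
Local Notation cc i := (count (fun j => sat (segF k) w j) (iota 1 i)).
Hypothesis HB : forall j, (0 < j)%N -> (j <= N)%N -> sg j ->
  nth None (map Some w) j.-1 = omap Some (nth None (map Some u) (cc j).-1).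

Let P f := forall i, (i <= N)%N -> (regulated f || (0 < i)%N && sg i) ->
  sat (tr k f) w i = sat f u (cc i).
Let Q l := forall i, (i <= N)%N -> lval (trl k l) w i = lval l u (cc i).

Lemma count_tr g i : P g -> (i <= N)%N ->
  count (fun j => sat (FAnd (segF k) (tr k g)) w j) (iota 1 i) =
  count (fun j => sat g u j) (iota 1 (cc i)).
Proof.
move=> Pg hi; rewrite -count_seg; apply: eq_in_count => j.
rewrite mem_iota add1n ltnS => /andP[h1 h2].
rewrite sat_and.
case E: (sat (segF k) w j); last by [].
rewrite !andTb; apply: Pg; first exact: leq_trans h2 hi.
by rewrite h1 E orbT.
Qed.

Lemma tr_correct : forall f, P f.
Proof.
apply: (@form_ind2 S P Q).
-
  move=> a i hi /= /andP[h0 hs].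
  have hc := @count_pos (fun j => sat (segF k) w j) i h0 hs.
  rewrite h0 /=; move: hc; case: (0 < _)%N => // _ /=.
  rewrite (HB h0 hi hs).
  by case: (nth None (map Some u) (cc i).-1).
-
  move=> g IH i hi hreg.
  have hg : sat (tr k g) w i = sat g u (cc i) by apply: IH.
  rewrite [tr k (FDia g)]/= FOr_sat !sat_and sat_not sat_and !geF_sat.
  rewrite !count_tr // hg.
  rewrite [sat (FDia g) u _]/= has_count.
  rewrite (count_iota_pred _ (cc i)).
  case: ((0 < cc i)%N && sat g u (cc i)).
    by rewrite /= orbF addnS ltnS addn0.
  by rewrite /= addn0.
-
  move=> g IH i hi hreg.
  rewrite /=.
  rewrite -[all _ (iota 1 i)]negbK -has_predC -[all _ (iota 1 (cc i))]negbK -has_predC.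
  rewrite !has_count; f_equal; f_equal.
  rewrite -count_seg; apply: eq_in_count => j.
  rewrite mem_iota add1n ltnS => /andP[h1 h2] /=.
  case E: (sat (segF k) w j); last by [].
  rewrite /= negbK; f_equal; apply: IH; first exact: leq_trans h2 hi.
  by rewrite h1 E orbT.
-
  by move=> g IH i hi hreg /=; rewrite IH.
-
  move=> g IHg h IHh i hi /= hreg.
  have [rg rh] : (regulated g || (0 < i)%N && sg i) /\ (regulated h || (0 < i)%N && sg i).
    by case/orP: hreg => [/andP[-> ->]|->]; rewrite ?orbT.
  by rewrite IHg // IHh.
-
  by move=> l IHl c m i hi _ /=; rewrite IHl.
- by [].
-
  move=> a g IHg r IHr i hi /=.
  by rewrite count_tr // IHr.
-
  by move=> a c r IHr i hi /=; rewrite IHr.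
Qed.


End Inner.

Lemma tr_main (w : seq (option S)) (u : seq S) (k N : nat) :
  (forall j, (0 < j)%N -> (j <= N)%N -> sat (segF k) w j ->
    nth None (map Some w) j.-1 =
    omap Some (nth None (map Some u) (count (fun j => sat (segF k) w j) (iota 1 j)).-1)) ->
  forall f i, (i <= N)%N -> regulated f ->
  sat (tr k f) w i = sat f u (count (fun j => sat (segF k) w j) (iota 1 i)).
Proof. by move=> HB f i hi hr; apply: (tr_correct HB); rewrite ?hr. Qed.
End Tr0.

Section Conc.
Variable S : eqType.
Implicit Types (w : seq (option S)).

Definition dol w j := (0 < j)%N && (nth None (map Some w) j.-1 == Some None).
Definition sgk k w j := ~~ dol w j && (count (dol w) (iota 1 j) == k).
Definition cc k w j := count (sgk k w) (iota 1 j).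

Fixpoint U (k : nat) w : seq S :=
  match w with
  | [::] => [::]
  | Some a :: r => if k is 0 then a :: U 0 r else U k r
  | None :: r => if k is k'.+1 then U k' r else [::]
  end.

Lemma count_shift (p : pred nat) j :
  count p (iota 1 j.+1) = p 1 + count (fun x => p x.+1) (iota 1 j).
Proof.
have -> : iota 1 j.+1 = 1 :: iota (1 + 1) j by [].
rewrite iotaDl -cat1s count_cat count_map /= addn0; congr (_ + _); apply: eq_count => y /=; by rewrite add1n.
Qed.

Lemma count_shift_in (p q : pred nat) j :
  (forall y, (0 < y)%N -> p y.+1 = q y) ->
  count (fun x => p x.+1) (iota 1 j) = count q (iota 1 j).
Proof.
move=> H; apply: eq_in_count => y; rewrite mem_iota => /andP[h _]; exact: H.
Qed.

Lemma dol_cons1 x w : dol (x :: w) 1 = (x == None).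
Proof. by case: x. Qed.
Lemma dol_consS x w j : (0 < j)%N -> dol (x :: w) j.+1 = dol w j.
Proof. by case: j. Qed.

Lemma count_dol x w j :
  count (dol (x :: w)) (iota 1 j.+1) = (x == None) + count (dol w) (iota 1 j).
Proof.
rewrite count_shift dol_cons1; congr (_ + _); apply: count_shift_in => y hy.
exact: dol_consS.
Qed.

Lemma sgk_Some k a w j : (0 < j)%N -> sgk k (Some a :: w) j.+1 = sgk k w j.
Proof. by move=> hj; rewrite /sgk dol_consS // count_dol. Qed.
Lemma sgk_Some1 k a w : sgk k (Some a :: w) 1 = (k == 0).
Proof. by rewrite /sgk dol_cons1 /= eq_sym. Qed.
Lemma sgk_None0 w j : sgk 0 (None :: w) j.+1 = false.
Proof. by rewrite /sgk count_dol /= andbF. Qed.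
Lemma sgk_NoneS k w j : (0 < j)%N -> sgk k.+1 (None :: w) j.+1 = sgk k w j.
Proof. by move=> hj; rewrite /sgk dol_consS // count_dol. Qed.
Lemma sgk_NoneS1 k w : sgk k.+1 (None :: w) 1 = false.
Proof. by rewrite /sgk dol_cons1. Qed.

Lemma cc_Some k a w j : cc k (Some a :: w) j.+1 = (k == 0) + cc k w j.
Proof.
rewrite /cc count_shift sgk_Some1; congr (_ + _); apply: count_shift_in => y hy.
exact: sgk_Some.
Qed.
Lemma cc_None0 w j : cc 0 (None :: w) j = 0.
Proof.
case: j => [|j] //; rewrite /cc count_shift sgk_None0 add0n.
by apply/eqP; rewrite -leqn0 leqNgt -has_count; apply/hasP => -[y _]; rewrite sgk_None0.
Qed.
Lemma cc_NoneS k w j : cc k.+1 (None :: w) j.+1 = cc k w j.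
Proof.
rewrite /cc count_shift sgk_NoneS1 add0n; apply: count_shift_in => y hy.
exact: sgk_NoneS.
Qed.

Lemma key w : forall k, cc k w (size w) = size (U k w) /\
  forall j, (0 < j)%N -> (j <= size w)%N -> sgk k w j ->
    nth None (map Some w) j.-1 = omap Some (nth None (map Some (U k w)) (cc k w j).-1).
Proof.
elim: w => [|x w IH] k.
  by split => // -[|j].
have [IH1 IH2] := IH k.
case: x => [a|]; case: k IH1 IH2 => [|k] IH1 IH2.
- split; first by rewrite /= cc_Some IH1.
  move=> [|[|j]] _ hj hs //; try by rewrite cc_Some.
  rewrite sgk_Some // in hs.
  rewrite cc_Some /= add0n.
  have hp : (0 < cc 0 w j.+1)%N by apply: count_pos.
  rewrite (IH2 j.+1) //.
  by case: (cc 0 w j.+1) hp.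
- split; first by rewrite /= cc_Some IH1.
  move=> [|[|j]] _ hj hs //; try by rewrite sgk_Some1 in hs.
  rewrite sgk_Some // in hs.
  by rewrite cc_Some /= add0n (IH2 j.+1).
- split; first by rewrite cc_None0.
  by move=> [|j] // _ hj; rewrite sgk_None0.
- have [IH1' IH2'] := IH k.
  split; first by rewrite /= cc_NoneS IH1'.
  move=> [|[|j]] _ hj hs //; try by rewrite sgk_NoneS1 in hs.
  rewrite sgk_NoneS // in hs.
  by rewrite cc_NoneS /= (IH2' j.+1).
Qed.
End Conc.

Section Split.
Variable S : eqType.

Fixpoint splitd (w : seq (option S)) : seq (seq S) :=
  match w with
  | [::] => [:: [::]]
  | Some a :: r => match splitd r with s :: ss => (a :: s) :: ss | [::] => [::] end
  | None :: r => [::] :: splitd r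
  end.

Lemma sepjoin_cons (u : seq S) ss :
  sepjoin (u :: ss) = map Some u ++ (if ss is [::] then [::] else None :: sepjoin ss).
Proof. by case: ss => [|s ss] //=; rewrite cats0. Qed.

Lemma splitd_ne w : exists s ss, splitd w = s :: ss.
Proof.
elim: w => [|x w [s [ss IH]]]; first by exists [::], [::].
case: x => [a|] /=; rewrite IH; by do 2 eexists.
Qed.

Lemma size_splitd w : size (splitd w) = (count (pred1 None) w).+1.
Proof.
elim: w => [|x w IH] //; case: x => [a|] /=.
  by have [s [ss E]] := splitd_ne w; rewrite E /= -IH E.
by rewrite IH.
Qed.

Lemma sepjoin_splitd w : sepjoin (splitd w) = w.
Proof.
elim: w => [|x w IH] //; case: x => [a|] /=.
  have [s [ss E]] := splitd_ne w; rewrite E in IH *.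
  by rewrite sepjoin_cons -IH sepjoin_cons.
by have [s [ss E]] := splitd_ne w; rewrite E in IH *; rewrite IH.
Qed.

Lemma U_mapSome (u : seq S) k : U k (map Some u) = if k is 0 then u else [::].
Proof. by elim: u k => [|a u IH] [|k] //=; rewrite IH. Qed.

Lemma U_cat (u : seq S) r k :
  U k (map Some u ++ None :: r) = if k is k'.+1 then U k' r else u.
Proof. by elim: u k => [|a u IH] [|k] //=; rewrite IH. Qed.

Lemma U_sepjoin (ws : seq (seq S)) k : ws != [::] -> U k (sepjoin ws) = nth [::] ws k.
Proof.
elim: ws k => [|u ss IH] k // _.
rewrite sepjoin_cons; case: ss IH => [|s ss] IH.
  by rewrite cats0 U_mapSome; case: k => [|[|k]].
by rewrite U_cat; case: k => [|k] //=; rewrite IH.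
Qed.

Lemma count_sepjoin (ws : seq (seq S)) : ws != [::] ->
  count (pred1 None) (sepjoin ws) = (size ws).-1.
Proof.
elim: ws => [|u ss IH] // _.
rewrite sepjoin_cons count_cat.
have -> : count (pred1 None) (map Some u) = 0.
  by rewrite count_map; apply/eqP; rewrite -leqn0 leqNgt -has_count; apply/hasP => -[].
case: ss IH => [|s ss] IH //=.
by rewrite IH.
Qed.

Lemma count_dol_all (w : seq (option S)) : count (dol w) (iota 1 (size w)) = count (pred1 None) w.
Proof.
elim: w => [|x w IH] //.
by rewrite count_dol IH /= eq_sym.
Qed.
End Split.

Fixpoint bigand {T} (G : nat -> form T) m : form T :=
  match m with 0 => FCmp LNil CEq 0%R | m'.+1 => FAnd (bigand G m') (G m') end.

Lemma sat_bigand (T : eqType) (G : nat -> form T) m w i :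
  sat (bigand G m) w i <-> (forall k, (k < m)%N -> sat (G k) w i).
Proof.
elim: m => [|m IH] /=; first by split.
split.
  move/andP => [/IH H1 H2] k; rewrite ltnS leq_eqVlt => /orP[/eqP -> //|]; exact: H1.
move=> H; apply/andP; split; last exact: H.
by apply/IH => k hk; apply: H; exact: ltnW.
Qed.

Lemma tr_models (S : eqType) (f : form S) k (w : seq (option S)) :
  regulated f -> sat (tr k f) w (size w) = models (U k w) f.
Proof.
move=> hr.
have E : forall j, count (fun j => sat (@segF S k) w j) (iota 1 j) = cc k w j.
  by move=> j; apply: eq_count => y; rewrite sat_segF.
have [K1 K2] := key w k.
rewrite (@tr_main S w (U k w) k (size w)) //.
  by rewrite E K1.
move=> j h0 hj hs; rewrite E; apply: K2 => //.
by rewrite sat_segF in hs.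
Qed.

Theorem lemma3p5 (S : finType) (n : nat) (L : nat -> seq S -> Prop) :
  (0 < n)%N ->
  (forall i, (i < n)%N -> reg_definable (L i)) ->
  definable (sepconcat n L).
Proof.
move=> hn hL.
have [F HF] : exists F : nat -> form S, forall i, (i < n)%N ->
    regulated (F i) /\ (forall w, L i w <-> models w (F i)).
  suff H : forall m, (m <= n)%N -> exists F : nat -> form S, forall i, (i < m)%N ->
      regulated (F i) /\ (forall w, L i w <-> models w (F i)).
    exact: H.
  elim => [|m IHm] hm; first by exists (fun _ => FCmp LNil CEq 0%R).
  have [F HF] := IHm (ltnW hm).
  have [f [rf hf]] := hL m hm.
  exists (fun i => if i == m then f else F i) => i hi.
  case: eqP => [->|ne]; first by split.
  apply: HF; move: hi; rewrite ltnS leq_eqVlt => /orP[/eqP //|//].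
exists (FAnd (FCmp (LCount 1%R (FSym None) LNil) CEq (Posz n.-1))
             (bigand (fun k => tr k (F k)) n)).
move=> w; rewrite /models [sat (FAnd _ _) _ _]/=.
have Ecnt : (1 * Posz (count (fun j => sat (FSym None) w j) (iota 1 (size w))) + 0)%R
            = Posz (count (pred1 None) w).
  by rewrite mul1r addr0 -count_dol_all.
rewrite Ecnt eqz_nat.
split.
  move=> [ws [hs [hl ->]]].
  have wsn : ws != [::] by apply/eqP => E; move: hs hn; rewrite E /= => <-.
  rewrite count_sepjoin // hs eqxx /=.
  apply/sat_bigand => k hk.
  rewrite tr_models; last by case: (HF k hk).
  rewrite U_sepjoin //.
  by have [_ H] := HF k hk; apply/H/hl.
move=> /andP[/eqP hc /sat_bigand hb].
exists (splitd w); split; first by rewrite size_splitd hc prednK.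
split; last by rewrite sepjoin_splitd.
move=> k hk.
have [rk H] := HF k hk; apply/H.
have := hb k hk; rewrite tr_models //.
have ne : splitd w != [::] by have [s [ss ->]] := splitd_ne w.
by rewrite -{1}(sepjoin_splitd w) U_sepjoin.
Qed.
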